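(* Let $E$ be an arbitrary directed graph and $U$ a compact open invariant subset of $G_E^{(0)}$. Let $\mathcal{M}$ be the set of all minimal nonempty compact open invariant subsets of $G_E^{(0)}$ contained in $U$. Then $\mathcal{M}$ is finite, its elements are pairwise disjoint, and $U=\bigsqcup_{V\in\mathcal{M}}V$.
   Context: For a directed graph $E$ (paths $\mu=\mu_1\cdots\mu_n$ with $r(\mu_i)=s(\mu_{i+1})$, $|\mu|=n$, $\mathrm{Path}(E)$ the finite paths including vertices, $E^\infty$ infinite paths, sinks = vertices emitting no edges, $\mathrm{Inf}(E)$ = vertices emitting infinitely many edges), let $X=E^\infty\cup\{\mu\in\mathrm{Path}(E): r(\mu)\text{ a sink}\}\cup\{\mu: r(\mu)\in\mathrm{Inf}(E)\}$ and $G_E=\{(\alpha x,|\alpha|-|\beta|,\beta x):\alpha,\beta\in\mathrm{Path}(E),x\in X,r(\alpha)=r(\beta)=s(x)\}$, with product $(x,k,y)(y,l,z)=(x,k+l,z)$, inverse $(y,-k,x)$, range $(x,0,x)$, source $(y,0,y)$; unit space $G_E^{(0)}=\{(x,0,x)\}\cong X$, topologized by the basis of compact open sets $Z(\mu)\setminus\bigcup_{e\in F}Z(\mu e)$ with $Z(\mu)=\{\mu x:x\in X,s(x)=r(\mu)\}$ and $F\subseteq s^{-1}(r(\mu))$ finite. $U\subseteq G_E^{(0)}$ is invariant if for every $\gamma\in G_E$, $s(\gamma)\in U$ iff $r(\gamma)\in U$. A minimal compact open invariant subset is a nonempty compact open invariant subset containing no strictly smaller nonempty compact open invariant subset. *)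

(* Defs.v *)
From Stdlib Require Import List ZArith Arith.
Import ListNotations.
Set Implicit Arguments.

Record Graph : Type := MkGraph {
  vert : Type;
  edge : Type;
  src : edge -> vert;
  rng : edge -> vert
}.
Arguments src {_} _.
Arguments rng {_} _.

Section GraphDefs.
Variable E : Graph.

Definition sink (v : vert E) : Prop := forall e : edge E, src e <> v.
Definition inf_emitter (v : vert E) : Prop :=
  ~ exists l : list (edge E), forall e, src e = v -> In e l.

(* A finite path is represented by its source vertex v and its edge list l
   (l = [] gives the vertex v, a path of length 0). *)
Fixpoint fvalid (v : vert E) (l : list (edge E)) : Prop :=
  match l with
  | [] => True
  | e :: t => src e = v /\ fvalid (rng e) t
  end.

Fixpoint rangeOf (v : vert E) (l : list (edge E)) : vert E :=
  match l with
  | [] => v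
  | e :: t => rangeOf (rng e) t
  end.

Definition infpath (f : nat -> edge E) : Prop :=
  forall n, rng (f n) = src (f (S n)).

Inductive bpath : Type :=
| FinP : vert E -> list (edge E) -> bpath
| InfP : (nat -> edge E) -> bpath.

Definition inX (x : bpath) : Prop :=
  match x with
  | FinP v l => fvalid v l /\ (sink (rangeOf v l) \/ inf_emitter (rangeOf v l))
  | InfP f => infpath f
  end.

Definition bsrc (x : bpath) : vert E :=
  match x with
  | FinP v _ => v
  | InfP f => src (f 0)
  end.

Definition concat (v : vert E) (l : list (edge E)) (x : bpath) : bpath :=
  match x with
  | FinP _ l' => FinP v (l ++ l')
  | InfP f => InfP (fun n => if n <? length l then nth n l (f 0)
                            else f (n - length l))
  end.

Definition inG (x : bpath) (k : Z) (y : bpath) : Prop :=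
  exists (a : vert E) (la : list (edge E)) (b : vert E) (lb : list (edge E))
         (z : bpath),
    fvalid a la /\ fvalid b lb /\ inX z /\
    rangeOf a la = bsrc z /\ rangeOf b lb = bsrc z /\
    x = concat a la z /\ y = concat b lb z /\
    k = (Z.of_nat (length la) - Z.of_nat (length lb))%Z.

(* subsets of the unit space G_E^(0) ≅ X are predicates on bpath contained in inX *)
Definition subX (U : bpath -> Prop) : Prop := forall x, U x -> inX x.

Definition cyl (v : vert E) (l : list (edge E)) (y : bpath) : Prop :=
  exists z, inX z /\ bsrc z = rangeOf v l /\ y = concat v l z.

Definition basic (v : vert E) (l : list (edge E)) (F : list (edge E))
  (y : bpath) : Prop :=
  cyl v l y /\ ~ (exists e, In e F /\ cyl v (l ++ [e]) y).

Definition basic_ok (v : vert E) (l : list (edge E)) (F : list (edge E)) : Prop :=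
  fvalid v l /\ (forall e, In e F -> src e = rangeOf v l).

Definition is_open (O : bpath -> Prop) : Prop :=
  subX O /\
  forall x, O x -> exists v l F, basic_ok v l F /\ basic v l F x /\
                                 (forall y, basic v l F y -> O y).

Definition is_compact (K : bpath -> Prop) : Prop :=
  subX K /\
  forall C : (bpath -> Prop) -> Prop,
    (forall O, C O -> is_open O) ->
    (forall x, K x -> exists O, C O /\ O x) ->
    exists L : list (bpath -> Prop),
      (forall O, In O L -> C O) /\ (forall x, K x -> exists O, In O L /\ O x).

Definition invariant (U : bpath -> Prop) : Prop :=
  forall x k y, inG x k y -> (U y <-> U x).

Definition compact_open_invariant (U : bpath -> Prop) : Prop :=
  subX U /\ is_open U /\ is_compact U /\ invariant U.

Definition minimal_coi (V : bpath -> Prop) : Prop :=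
  compact_open_invariant V /\ (exists x, V x) /\
  forall W, compact_open_invariant W -> (exists x, W x) ->
            (forall x, W x -> V x) -> (forall x, V x -> W x).

End GraphDefs.

Arguments FinP {E}.
Arguments InfP {E}.

(* Main.v *)
Require Import Defs.
From Stdlib Require Import List ZArith Lia Classical ClassicalEpsilon FunctionalExtensionality.
Import ListNotations.

Section S.
Variable E : Graph.
Implicit Types (z x y : bpath E) (l m : list (edge E)) (a v : vert E) (f : nat -> edge E) (e : edge E).

Definition edgeAt (x : bpath E) (i : nat) : option (edge E) :=
  match x with
  | FinP _ l => nth_error l i
  | InfP f => Some (f i)
  end.

Definition dropn (n : nat) (x : bpath E) : bpath E :=
  match x with
  | FinP v l => FinP (rangeOf E v (firstn n l)) (skipn n l)
  | InfP f => InfP (fun k => f (n + k))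
  end.

Lemma fvalid_app a l1 l2 :
  fvalid E a (l1 ++ l2) <-> fvalid E a l1 /\ fvalid E (rangeOf E a l1) l2.
Proof.
  revert a; induction l1 as [|e l1 IH]; intros a; simpl.
  - tauto.
  - rewrite IH. tauto.
Qed.

Lemma rangeOf_app a l1 l2 :
  rangeOf E a (l1 ++ l2) = rangeOf E (rangeOf E a l1) l2.
Proof. revert a; induction l1; intros; simpl; auto. Qed.

Lemma concat_nil z : Defs.concat (bsrc z) [] z = z.
Proof.
  destruct z as [v l|f]; simpl; auto.
  f_equal. apply functional_extensionality. intros n.
  simpl. f_equal. lia.
Qed.

Definition hfun (l : list (edge E)) (f : nat -> edge E) :=
  fun n => if n <? length l then nth n l (f 0) else f (n - length l).

Lemma hfun_S e l f n : hfun (e :: l) f (S n) = hfun l f n.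
Proof. unfold hfun. simpl. reflexivity. Qed.

Lemma hfun_0 e l f : hfun (e :: l) f 0 = e.
Proof. reflexivity. Qed.

Lemma hfun_nil f n : hfun [] f n = f n.
Proof. unfold hfun; simpl. f_equal; lia. Qed.

Lemma infpath_hfun a l f :
  fvalid E a l -> infpath E f -> rangeOf E a l = src (f 0) -> infpath E (hfun l f).
Proof.
  revert a; induction l as [|e l IH]; intros a Hv Hf Hr n.
  - rewrite !hfun_nil. apply Hf.
  - destruct Hv as [He Hv]. simpl in Hr.
    destruct n as [|n].
    + rewrite hfun_0, hfun_S.
      destruct l as [|e' l].
      * rewrite hfun_nil. exact Hr.
      * rewrite hfun_0. destruct Hv as [Hv _]. auto.
    + rewrite !hfun_S. eapply IH; eauto.
Qed.

Lemma bsrc_concat a l z :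
  fvalid E a l -> bsrc z = rangeOf E a l -> bsrc (Defs.concat a l z) = a.
Proof.
  intros Hv Hb. destruct z as [v m|f]; simpl; auto.
  change (src (hfun l f 0) = a).
  destruct l as [|e l]; simpl in *.
  - rewrite hfun_nil. auto.
  - rewrite hfun_0. tauto.
Qed.

Lemma inX_concat a l z :
  fvalid E a l -> inX z -> bsrc z = rangeOf E a l -> inX (Defs.concat a l z).
Proof.
  intros Hv Hx Hb. destruct z as [v m|f]; simpl in *.
  - destruct Hx as [Hm Hs]. subst v.
    rewrite fvalid_app, rangeOf_app. tauto.
  - change (infpath E (hfun l f)). eapply infpath_hfun; eauto.
Qed.

Lemma edgeAt_concat_lt a l z i :
  i < length l -> edgeAt (Defs.concat a l z) i = nth_error l i.
Proof.
  intros Hi. destruct z as [v m|f]; simpl.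
  - rewrite nth_error_app1; auto.
  - assert (H := Hi). apply Nat.ltb_lt in H. rewrite H.
    symmetry; apply nth_error_nth'; auto.
Qed.

Lemma edgeAt_concat_ge a l z i :
  edgeAt (Defs.concat a l z) (length l + i) = edgeAt z i.
Proof.
  destruct z as [v m|f]; simpl.
  - rewrite nth_error_app2 by lia. f_equal; lia.
  - assert (H : length l + i <? length l = false) by (apply Nat.ltb_ge; lia).
    rewrite H. f_equal. f_equal. lia.
Qed.

Lemma edgeAt_cyl a l z i : cyl a l z -> i < length l -> edgeAt z i = nth_error l i.
Proof.
  intros [z0 [_ [_ ->]]] Hi. apply edgeAt_concat_lt; auto.
Qed.

Lemma bsrc_cyl a l z : fvalid E a l -> cyl a l z -> bsrc z = a.
Proof.
  intros Hv [z0 [_ [Hb ->]]]. apply bsrc_concat; auto.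
Qed.

Lemma inX_cyl a l z : fvalid E a l -> cyl a l z -> inX z.
Proof.
  intros Hv [z0 [Hx [Hb ->]]]. apply inX_concat; auto.
Qed.

Lemma rangeOf_inf a l f :
  infpath E f -> src (f 0) = a ->
  (forall i, i < length l -> nth_error l i = Some (f i)) ->
  rangeOf E a l = src (f (length l)).
Proof.
  revert a f; induction l as [|e l IH]; intros a f Hf Ha Hl; simpl.
  - auto.
  - assert (He : e = f 0).
    { specialize (Hl 0 ltac:(simpl; lia)). simpl in Hl. congruence. }
    apply (IH (rng e) (fun k => f (S k))).
    + intros n. apply Hf.
    + subst e. symmetry. apply Hf.
    + intros i Hi. apply (Hl (S i)). simpl; lia.
Qed.

Lemma cyl_intro a l z :
  fvalid E a l -> inX z -> bsrc z = a ->
  (forall i, i < length l -> edgeAt z i = nth_error l i) -> cyl a l z.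
Proof.
  intros Hv Hx Hb Hl. exists (dropn (length l) z).
  destruct z as [v m|f]; simpl in *.
  - subst v. destruct Hx as [Hm Hs].
    assert (Hf : firstn (length l) m = l).
    { apply nth_error_ext. intros i. rewrite nth_error_firstn.
      destruct (Nat.ltb_spec i (length l)).
      - symmetry. rewrite <- Hl by auto. reflexivity.
      - symmetry. apply nth_error_None. auto. }
    assert (Hm' : m = l ++ skipn (length l) m).
    { rewrite <- (firstn_skipn (length l) m) at 1. rewrite Hf. reflexivity. }
    rewrite Hf. rewrite Hm' in Hm, Hs. rewrite fvalid_app in Hm. rewrite rangeOf_app in Hs.
    split; [tauto|]. split; auto. rewrite <- Hm'. auto.
  - split; [intros n; rewrite Nat.add_succ_r; apply Hx|]. split.
    + rewrite Nat.add_0_r. symmetry. apply rangeOf_inf; auto.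
      intros i Hi. rewrite <- Hl; auto.
    + f_equal. apply functional_extensionality. intros n.
      destruct (Nat.ltb_spec n (length l)).
      * specialize (Hl n H). symmetry in Hl. rewrite (nth_error_nth l n (f (length l + 0)) Hl). reflexivity.
      * f_equal. lia.
Qed.

Lemma cyl_iff a l z : fvalid E a l ->
  (cyl a l z <-> inX z /\ bsrc z = a /\ (forall i, i < length l -> edgeAt z i = nth_error l i)).
Proof.
  intros Hv; split.
  - intros H. split; [eapply inX_cyl; eauto|]. split; [eapply bsrc_cyl; eauto|].
    intros; eapply edgeAt_cyl; eauto.
  - intros [? [? ?]]. apply cyl_intro; auto.
Qed.

Lemma inv_concat (W : bpath E -> Prop) a l z :
  invariant W -> fvalid E a l -> inX z -> bsrc z = rangeOf E a l ->
  (W (Defs.concat a l z) <-> W z).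
Proof.
  intros Hw Hv Hx Hb. symmetry. apply (Hw _ (Z.of_nat (length l) - Z.of_nat 0)%Z).
  exists a, l, (bsrc z), [], z. repeat split; auto.
  rewrite concat_nil. auto.
Qed.


Lemma nth_error_snoc l e : nth_error (l ++ [e]) (length l) = Some e.
Proof. rewrite nth_error_app2 by lia. rewrite Nat.sub_diag. reflexivity. Qed.

Lemma cyl_snoc a l e z :
  fvalid E a l -> src e = rangeOf E a l -> cyl a l z ->
  edgeAt z (length l) = Some e -> cyl a (l ++ [e]) z.
Proof.
  intros Hv He Hc Hz.
  assert (Hv' : fvalid E a (l ++ [e])) by (apply fvalid_app; simpl; tauto).
  apply cyl_iff in Hc; auto. destruct Hc as [Hx [Hb Hl]].
  apply cyl_intro; auto.
  intros i Hi. rewrite length_app in Hi; simpl in Hi.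
  destruct (Nat.eq_dec i (length l)).
  - subst. rewrite nth_error_snoc. auto.
  - rewrite nth_error_app1 by lia. apply Hl. lia.
Qed.

Lemma cyl_snoc_edge a l e z : cyl a (l ++ [e]) z -> edgeAt z (length l) = Some e.
Proof.
  intros H. rewrite (edgeAt_cyl _ _ _ _ H). apply nth_error_snoc.
  rewrite length_app; simpl; lia.
Qed.

Lemma is_open_basic a l F : basic_ok E a l F -> is_open (basic a l F).
Proof.
  intros Hok. split.
  - intros x [Hc _]. eapply inX_cyl; eauto. apply Hok.
  - intros x Hx. exists a, l, F. auto.
Qed.

Lemma is_open_cyl a l : fvalid E a l -> is_open (cyl a l).
Proof.
  intros Hv. split.
  - intros x Hc. eapply inX_cyl; eauto.
  - intros x Hx. exists a, l, []. split; [split; simpl; tauto|].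
    split.
    + split; auto. intros [e [[] _]].
    + intros y [Hy _]; auto.
Qed.

Lemma basic_inter_aux a l F b m G y :
  length l <= length m ->
  basic_ok E a l F -> basic_ok E b m G -> basic a l F y -> basic b m G y ->
  exists c n H, basic_ok E c n H /\ basic c n H y /\
    forall z, basic c n H z -> basic a l F z /\ basic b m G z.
Proof.
  intros Hlen Hok1 Hok2 [Hc1 Hn1] [Hc2 Hn2].
  pose proof Hok1 as [Hv1 HF]. pose proof Hok2 as [Hv2 HG].
  pose proof Hc1 as Hc1'. pose proof Hc2 as Hc2'.
  apply cyl_iff in Hc1'; auto. apply cyl_iff in Hc2'; auto.
  destruct Hc1' as [Hx [Hb1 He1]]. destruct Hc2' as [_ [Hb2 He2]].
  assert (Hab : b = a) by congruence. rewrite Hab in *. clear Hab.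
  destruct (Nat.eq_dec (length l) (length m)) as [Heq|Hne].
  - assert (l = m).
    { apply nth_error_ext. intros i. destruct (Nat.ltb_spec i (length l)).
      - rewrite <- He1, <- He2 by lia. auto.
      - rewrite (proj2 (nth_error_None l i)) by lia.
        rewrite (proj2 (nth_error_None m i)) by lia. auto. }
    subst m. exists a, l, (F ++ G). split.
    { split; auto. intros e He. apply in_app_or in He. destruct He. all: auto. }
    split.
    + split; auto. intros [e [He Hc]]. apply in_app_or in He.
      destruct He; [apply Hn1|apply Hn2]; eauto.
    + intros z [Hz Hzn]. split; split; auto; intros [e [He Hc]]; apply Hzn;
        exists e; split; auto; apply in_or_app; auto.
  - exists a, m, G. split; auto. split; [split; auto|].
    intros z [Hz Hzn]. split; [|split; auto].
    pose proof Hz as Hz'. apply cyl_iff in Hz'; auto. destruct Hz' as [Hzx [Hzb Hze]].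
    assert (Hcz : cyl a l z).
    { apply cyl_intro; auto. intros i Hi. rewrite Hze by lia. rewrite <- He2 by lia. auto. }
    split; auto. intros [e [He Hce]].
    apply cyl_snoc_edge in Hce. rewrite Hze in Hce by lia. rewrite <- He2 in Hce by lia.
    apply Hn1. exists e. split; auto. apply cyl_snoc; auto.
Qed.

Lemma basic_inter a l F b m G y :
  basic_ok E a l F -> basic_ok E b m G -> basic a l F y -> basic b m G y ->
  exists c n H, basic_ok E c n H /\ basic c n H y /\
    forall z, basic c n H z -> basic a l F z /\ basic b m G z.
Proof.
  intros. destruct (Nat.le_ge_cases (length l) (length m)).
  - eapply basic_inter_aux; eauto.
  - destruct (basic_inter_aux b m G a l F y) as [c [n [H' [? [? Hs]]]]]; auto.
    exists c, n, H'. split; auto. split; auto. intros z Hz. apply Hs in Hz. tauto.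
Qed.

Lemma open_inter (O1 O2 : bpath E -> Prop) :
  is_open O1 -> is_open O2 -> is_open (fun y => O1 y /\ O2 y).
Proof.
  intros [Hs1 H1] [Hs2 H2]. split.
  - intros x [Hx _]; auto.
  - intros x [Hx1 Hx2].
    destruct (H1 x Hx1) as [a [l [F [Hok1 [Hb1 Hsub1]]]]].
    destruct (H2 x Hx2) as [b [m [G [Hok2 [Hb2 Hsub2]]]]].
    destruct (basic_inter a l F b m G x) as [c [n [H [Hok [Hb Hs]]]]]; auto.
    exists c, n, H. split; auto. split; auto. intros z Hz. apply Hs in Hz.
    destruct Hz; split; auto.
Qed.

Lemma filter_C (C : (bpath E -> Prop) -> Prop) (L' : list (bpath E -> Prop)) :
  exists L, (forall O, In O L -> C O) /\ (forall O, In O L' -> C O -> In O L).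
Proof.
  induction L' as [|O L' [L [H1 H2]]].
  - exists []. simpl; tauto.
  - destruct (classic (C O)).
    + exists (O :: L). simpl. split.
      * intros O' [<-|?]; auto.
      * intros O' [<-|?] ?; auto.
    + exists L. split; auto. simpl. intros O' [<-|?] ?; auto. contradiction.
Qed.

Lemma compact_sub (K S O : bpath E -> Prop) :
  is_compact K -> is_open O -> (forall y, S y -> K y) -> (forall y, S y -> ~ O y) ->
  (forall y, K y -> S y \/ O y) -> is_compact S.
Proof.
  intros [HKx HK] HO HSK HSO HKSO. split.
  - intros y Hy; auto.
  - intros C HC Hcov.
    destruct (HK (fun O' => C O' \/ O' = O)) as [L' [HL'1 HL'2]].
    + intros O' [?| ->]; auto.
    + intros x Hx. destruct (HKSO x Hx) as [Hs|Ho].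
      * destruct (Hcov x Hs) as [O' [? ?]]. exists O'; auto.
      * exists O; auto.
    + destruct (filter_C C L') as [L [HL1 HL2]].
      exists L. split; auto.
      intros x Hx. destruct (HL'2 x (HSK x Hx)) as [O' [Hin HO']].
      destruct (HL'1 O' Hin) as [HC'| ->].
      * exists O'. auto.
      * exfalso. eapply HSO; eauto.
Qed.

Definition coi (W : bpath E -> Prop) := compact_open_invariant W.

Lemma coi_union (W1 W2 : bpath E -> Prop) :
  coi W1 -> coi W2 -> coi (fun y => W1 y \/ W2 y).
Proof.
  intros [Hs1 [[_ Ho1] [[_ Hc1] Hi1]]] [Hs2 [[_ Ho2] [[_ Hc2] Hi2]]].
  assert (Hs : subX (fun y => W1 y \/ W2 y)) by (intros y [?|?]; auto).
  split; auto. split; [split; auto|]. 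
  { intros x Hx. destruct Hx as [Hx|Hx].
    - destruct (Ho1 x Hx) as [a [l [F [Hk [Hb Hsub]]]]].
      exists a, l, F. split; [exact Hk|]. split; [exact Hb|]. intros y Hy. left. auto.
    - destruct (Ho2 x Hx) as [a [l [F [Hk [Hb Hsub]]]]].
      exists a, l, F. split; [exact Hk|]. split; [exact Hb|]. intros y Hy. right. auto. }
  split; [split; auto|].
  - intros C HC Hcov.
    destruct (Hc1 C HC) as [L1 [H11 H12]]; [intros x Hx; apply Hcov; auto|].
    destruct (Hc2 C HC) as [L2 [H21 H22]]; [intros x Hx; apply Hcov; auto|].
    exists (L1 ++ L2). split.
    + intros O Hin. apply in_app_or in Hin. destruct Hin; auto.
    + intros x [Hx|Hx]; [destruct (H12 x Hx) as [O [? ?]]|destruct (H22 x Hx) as [O [? ?]]];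
        exists O; split; auto; apply in_or_app; auto.
  - intros x k y Hg. specialize (Hi1 x k y Hg). specialize (Hi2 x k y Hg). tauto.
Qed.

Lemma coi_empty : coi (fun _ => False).
Proof.
  split; [intros ? []|]. split; [split; [intros ? []|intros ? []]|].
  split; [split; [intros ? []|]|].
  - intros C _ _. exists []. split; [intros ? []|intros ? []].
  - intros x k y _. tauto.
Qed.


Definition pre f k : list (edge E) := map f (seq 0 k).

Lemma pre_length f k : length (pre f k) = k.
Proof. unfold pre. rewrite length_map, length_seq. auto. Qed.

Lemma pre_nth f k i : nth_error (pre f k) i = if i <? k then Some (f i) else None.
Proof.
  unfold pre. rewrite nth_error_map, nth_error_seq.
  destruct (i <? k); auto.
Qed.

Lemma pre_S f k : pre f (S k) = pre f k ++ [f k].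
Proof. unfold pre. rewrite seq_S, map_app. reflexivity. Qed.

Lemma pre_fvalid f k : infpath E f -> fvalid E (src (f 0)) (pre f k).
Proof.
  intros Hf. induction k as [|k IH].
  - simpl. auto.
  - rewrite pre_S. apply fvalid_app. split; auto. simpl. split; auto.
    symmetry. rewrite (rangeOf_inf (src (f 0)) (pre f k) f); auto.
    + rewrite pre_length. auto.
    + intros i Hi. rewrite pre_length in Hi. rewrite pre_nth.
      apply Nat.ltb_lt in Hi. rewrite Hi. auto.
Qed.

Lemma pre_cyl f k : infpath E f -> cyl (src (f 0)) (pre f k) (InfP f).
Proof.
  intros Hf. apply cyl_intro; auto.
  - apply pre_fvalid; auto.
  - intros i Hi. rewrite pre_length in Hi. rewrite pre_nth.
    apply Nat.ltb_lt in Hi. rewrite Hi. auto.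
Qed.

Lemma extract_K (C : (bpath E -> Prop) -> Prop) (P : nat -> bpath E -> Prop) :
  (forall O, C O -> exists k, forall z, O z -> forall K, k <= K -> ~ P K z) ->
  forall L, (forall O, In O L -> C O) ->
  exists K0, forall O, In O L -> forall z, O z -> forall K, K0 <= K -> ~ P K z.
Proof.
  intros HC L. induction L as [|O L IH]; intros HL.
  - exists 0. intros ? [].
  - destruct IH as [K1 HK1]; [intros; apply HL; simpl; auto|].
    destruct (HC O) as [k Hk]; [apply HL; simpl; auto|].
    exists (Nat.max k K1). intros O' [<-|Hin] z Hz K HK.
    + apply (Hk z Hz). lia.
    + apply (HK1 O' Hin z Hz). lia.
Qed.

Lemma closed_inf (W : bpath E -> Prop) f :
  is_compact W -> infpath E f -> ~ W (InfP f) ->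
  exists a l F, basic_ok E a l F /\ basic a l F (InfP f) /\ forall z, basic a l F z -> ~ W z.
Proof.
  intros [HWx HW] Hf Hy.
  set (a := src (f 0)).
  set (C := fun O : bpath E -> Prop =>
         is_open O /\ exists k, forall z, O z -> forall K, k <= K -> ~ cyl a (pre f K) z).
  destruct (HW C) as [L [HL1 HL2]].
  - intros O [? _]; auto.
  - intros z Hz. pose proof (HWx z Hz) as Hzx.
    destruct z as [b m|g].
    + destruct Hzx as [Hm Hend].
      destruct (classic (exists i, i < length m /\ nth_error m i <> Some (f i))) as [[i [Hi Hne]]|Hall].
      * assert (Hfv : fvalid E b (firstn (S i) m)).
        { rewrite <- (firstn_skipn (S i) m) in Hm. apply fvalid_app in Hm. tauto. }
        assert (Hlen : length (firstn (S i) m) = S i) by (rewrite length_firstn; lia).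
        exists (cyl b (firstn (S i) m)). split; [split|].
        -- apply is_open_cyl; auto.
        -- exists (S i). intros z' Hz' K HK Hc.
           apply (edgeAt_cyl _ _ _ i) in Hz'; [|lia].
           apply (edgeAt_cyl _ _ _ i) in Hc; [|rewrite pre_length; lia].
           rewrite pre_nth in Hc. rewrite nth_error_firstn in Hz'.
           assert (i <? K = true) by (apply Nat.ltb_lt; lia).
           assert (i <? S i = true) by (apply Nat.ltb_lt; lia).
           rewrite H in Hc. rewrite H0 in Hz'. congruence.
        -- apply cyl_intro; [exact Hfv|split; auto|reflexivity|].
           intros j Hj. rewrite Hlen in Hj. cbn [edgeAt]. rewrite nth_error_firstn.
           apply Nat.ltb_lt in Hj. rewrite Hj. auto.
      * assert (Hall' : forall i, i < length m -> nth_error m i = Some (f i)).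
        { intros i Hi. apply NNPP. intros Hne. apply Hall. eauto. }
        destruct (classic (b = a)) as [Hba|Hba].
        -- subst b. set (n := length m).
           assert (Hok : basic_ok E a m [f n]).
           { split; auto. intros e [<-|[]].
             rewrite (rangeOf_inf a m f); auto. }
           exists (basic a m [f n]). split; [split|].
           ++ apply is_open_basic; auto.
           ++ exists (S n). intros z' [Hz'1 Hz'2] K HK Hc.
              apply Hz'2. exists (f n). split; [simpl; auto|].
              apply cyl_snoc; [exact Hm|apply Hok; simpl; auto|exact Hz'1|].
              fold n. rewrite (edgeAt_cyl _ _ _ n Hc); [|rewrite pre_length; lia].
              rewrite pre_nth. assert (n <? K = true) by (apply Nat.ltb_lt; lia).
              rewrite H. auto.
           ++ split.
              ** apply cyl_intro; [exact Hm|split; auto|reflexivity|]. intros; simpl; auto.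
              ** intros [e [_ Hc]]. apply cyl_snoc_edge in Hc. simpl in Hc.
                 rewrite (proj2 (nth_error_None m (length m))) in Hc; [discriminate|lia].
        -- exists (cyl b []). split; [split|].
           ++ apply is_open_cyl; simpl; auto.
           ++ exists 0. intros z' Hz' K _ Hc.
              apply bsrc_cyl in Hz'; [|simpl; auto].
              apply bsrc_cyl in Hc; [|apply pre_fvalid; auto]. congruence.
           ++ apply cyl_intro; [simpl; auto|split; auto|reflexivity|]. intros; simpl in *; lia.
    + destruct (classic (exists n, g n <> f n)) as [[n Hn]|Hno].
      2:{ exfalso. assert (g = f).
          { apply functional_extensionality. intros n. apply NNPP. intros Hne. apply Hno. eauto. }
          subst g. contradiction. }
      exists (cyl (src (g 0)) (pre g (S n))). split; [split|].
      * apply is_open_cyl. apply pre_fvalid; auto.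
      * exists (S n). intros z' Hz' K HK Hc.
        apply (edgeAt_cyl _ _ _ n) in Hz'; [|rewrite pre_length; lia].
        apply (edgeAt_cyl _ _ _ n) in Hc; [|rewrite pre_length; lia].
        rewrite pre_nth in Hz', Hc.
        assert (n <? K = true) by (apply Nat.ltb_lt; lia).
        assert (n <? S n = true) by (apply Nat.ltb_lt; lia).
        rewrite H in Hc. rewrite H0 in Hz'. congruence.
      * apply pre_cyl; auto.
  - destruct (extract_K C (fun K z => cyl a (pre f K) z)) with (L := L) as [K0 HK0]; auto.
    { intros O [_ Hk]; auto. }
    exists a, (pre f K0), []. split; [split; [apply pre_fvalid; auto|intros ? []]|].
    split.
    + split; [apply pre_cyl; auto|]. intros [e [[] _]].
    + intros z [Hz _] HWz. destruct (HL2 z HWz) as [O [Hin HO]].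
      apply (HK0 O Hin z HO K0); auto.
Qed.


Lemma extract_G w (L : list (bpath E -> Prop)) :
  (forall O, In O L -> (exists w', w' <> w /\ O = cyl w' []) \/
                       (exists e, src e = w /\ O = cyl w [e])) ->
  exists G : list (edge E), (forall e, In e G -> src e = w) /\
    forall O, In O L -> (exists w', w' <> w /\ O = cyl w' []) \/
                        (exists e, In e G /\ O = cyl w [e]).
Proof.
  induction L as [|O L IH]; intros HL.
  - exists []. split; intros ? [].
  - destruct IH as [G [HG1 HG2]]; [intros; apply HL; simpl; auto|].
    destruct (HL O (or_introl eq_refl)) as [Hw|[e [He ->]]].
    + exists G. split; auto. intros O' [<-|Hin]; auto.
    + exists (e :: G). split.
      * intros e' [<-|?]; auto.
      * intros O' [<-|Hin].
        -- right. exists e. simpl; auto.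
        -- destruct (HG2 O' Hin) as [?|[e' [? ?]]]; auto. right. exists e'. simpl; auto.
Qed.

Lemma closed_fin (W : bpath E -> Prop) a l :
  is_compact W -> invariant W -> inX (FinP a l) -> ~ W (FinP a l) ->
  exists a' l' F, basic_ok E a' l' F /\ basic a' l' F (FinP a l) /\ forall z, basic a' l' F z -> ~ W z.
Proof.
  intros [HWx HW] Hinv Hx Hy. pose proof Hx as [Hv Hend].
  set (w := rangeOf E a l).
  set (y2 := @FinP E w []).
  assert (Hx2 : inX y2) by (simpl; auto).
  assert (Hyeq : FinP a l = Defs.concat a l y2) by (simpl; rewrite app_nil_r; auto).
  assert (Hy2 : ~ W y2).
  { intros H. apply Hy. rewrite Hyeq. apply (inv_concat W a l y2); auto. }
  set (C := fun O : bpath E -> Prop => (exists w', w' <> w /\ O = cyl w' []) \/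
                       (exists e, src e = w /\ O = cyl w [e])).
  destruct (HW C) as [L [HL1 HL2]].
  - intros O [[w' [_ ->]]|[e [He ->]]]; apply is_open_cyl; simpl; auto.
  - intros z Hz. pose proof (HWx z Hz) as Hzx.
    destruct (classic (bsrc z = w)) as [Hzw|Hzw].
    + destruct z as [v m|g].
      * destruct m as [|e m].
        -- exfalso. simpl in Hzw. subst v. apply Hy2. exact Hz.
        -- exists (cyl w [e]). split.
           ++ right. exists e. split; auto. destruct Hzx as [[He _] _]. simpl in Hzw. congruence.
           ++ apply cyl_intro; auto.
              ** simpl. split; auto. destruct Hzx as [[He _] _]. simpl in Hzw. congruence.
              ** intros i Hi. simpl in Hi. assert (i = 0) by lia. subst i. reflexivity.
      * exists (cyl w [g 0]). split.
        -- right. exists (g 0). split; auto.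
        -- apply cyl_intro; auto.
           ++ simpl. split; auto.
           ++ intros i Hi. simpl in Hi. assert (i = 0) by lia. subst i. reflexivity.
    + exists (cyl (bsrc z) []). split.
      * left. exists (bsrc z). split; auto.
      * apply cyl_intro; simpl; auto. intros; lia.
  - destruct (extract_G w L) as [G [HG1 HG2]]; [intros; apply HL1; auto|].
    exists a, l, G. split; [split; auto|]. split.
    + split.
      * exists y2. split; [exact Hx2|split; [reflexivity|exact Hyeq]].
      * intros [e [_ Hc]]. apply cyl_snoc_edge in Hc. simpl in Hc.
        rewrite (proj2 (nth_error_None l (length l))) in Hc; [discriminate|lia].
    + intros z [[z0 [Hz0x [Hz0b ->]]] Hzn] HWz.
      apply (inv_concat W a l z0 Hinv Hv Hz0x Hz0b) in HWz.
      destruct (HL2 z0 HWz) as [O [Hin HO]].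
      destruct (HG2 O Hin) as [[w' [Hw' ->]]|[e [HeG ->]]].
      * apply bsrc_cyl in HO; [|simpl; auto]. apply Hw'. rewrite <- HO, Hz0b. reflexivity.
      * apply Hzn. exists e. split; auto.
        apply cyl_snoc; auto.
        -- exists z0. auto.
        -- rewrite <- (Nat.add_0_r (length l)). rewrite edgeAt_concat_ge.
           rewrite (edgeAt_cyl _ _ _ 0 HO); simpl; auto.
Qed.

Lemma closed_coi (W : bpath E -> Prop) y :
  is_compact W -> invariant W -> inX y -> ~ W y ->
  exists a l F, basic_ok E a l F /\ basic a l F y /\ forall z, basic a l F z -> ~ W z.
Proof.
  intros Hc Hi Hx Hy. destruct y as [a l|f].
  - apply closed_fin; auto.
  - apply closed_inf; auto.
Qed.

Lemma open_compl (W : bpath E -> Prop) :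
  is_compact W -> invariant W -> is_open (fun y => inX y /\ ~ W y).
Proof.
  intros Hc Hi. split.
  - intros y [? _]; auto.
  - intros y [Hx Hy]. destruct (closed_coi W y Hc Hi Hx Hy) as [a [l [F [Hok [Hb Hs]]]]].
    exists a, l, F. split; auto. split; auto. intros z Hz. split; auto.
    destruct Hz as [Hz _]. eapply inX_cyl; eauto. apply Hok.
Qed.


Lemma is_open_ext (O O' : bpath E -> Prop) :
  (forall y, O y <-> O' y) -> is_open O -> is_open O'.
Proof.
  intros Heq [Hs Ho]. split.
  - intros y Hy. apply Hs, Heq, Hy.
  - intros x Hx. apply Heq in Hx. destruct (Ho x Hx) as [a [l [F [? [? Hsub]]]]].
    exists a, l, F. split; auto. split; auto. intros y Hy. apply Heq; auto.
Qed.

Lemma coi_inter (W1 W2 : bpath E -> Prop) :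
  coi W1 -> coi W2 -> coi (fun y => W1 y /\ W2 y).
Proof.
  intros [Hs1 [Ho1 [Hc1 Hi1]]] [Hs2 [Ho2 [Hc2 Hi2]]].
  split; [intros y [? _]; auto|].
  split; [apply open_inter; auto|].
  split.
  - apply (compact_sub W1 _ (fun y => inX y /\ ~ W2 y)); auto.
    + apply open_compl; auto.
    + intros y [? ?]; auto.
    + intros y [? ?] [? ?]; auto.
    + intros y Hy. destruct (classic (W2 y)); [left|right]; auto.
  - intros x k y Hg. specialize (Hi1 x k y Hg). specialize (Hi2 x k y Hg). tauto.
Qed.

Lemma coi_diff (W1 W2 : bpath E -> Prop) :
  coi W1 -> coi W2 -> coi (fun y => W1 y /\ ~ W2 y).
Proof.
  intros [Hs1 [Ho1 [Hc1 Hi1]]] [Hs2 [Ho2 [Hc2 Hi2]]].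
  split; [intros y [? _]; auto|].
  split.
  { apply (is_open_ext (fun y => W1 y /\ (inX y /\ ~ W2 y))).
    - intros y. split; [tauto|]. intros [? ?]; auto.
    - apply open_inter; auto. apply open_compl; auto. }
  split.
  - apply (compact_sub W1 _ W2); auto.
    + intros y [? ?]; auto.
    + intros y [? ?]; auto.
    + intros y Hy. destruct (classic (W2 y)); [right|left]; auto.
  - intros x k y Hg. specialize (Hi1 x k y Hg). specialize (Hi2 x k y Hg). tauto.
Qed.

Definition good (W : bpath E -> Prop) v :=
  exists F, (exists z, basic v [] F z) /\ forall z, basic v [] F z -> W z.

Lemma good_mono (W W' : bpath E -> Prop) v :
  (forall y, W' y -> W y) -> good W' v -> good W v.
Proof. intros H [F [Hn Hs]]. exists F. split; auto. Qed.

Lemma src_edge0 z e : inX z -> edgeAt z 0 = Some e -> src e = bsrc z.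
Proof.
  destruct z as [v m|f]; simpl.
  - destruct m as [|e' m]; simpl; [discriminate|]. intros [[He _] _] H. congruence.
  - intros _ H. congruence.
Qed.

Lemma P1 (W W' : bpath E -> Prop) y :
  coi W -> coi W' -> (forall z, W' z -> W z) -> W y -> ~ W' y ->
  exists v, (exists z, W z /\ bsrc z = v) /\ good W v /\ ~ good W' v.
Proof.
  intros HW HW' Hsub Hy Hy'.
  pose proof HW as [HWs [HWo [HWc HWi]]]. pose proof HW' as [HWs' [HWo' [HWc' HWi']]].
  assert (HB : is_open (fun y => W y /\ (inX y /\ ~ W' y))).
  { apply open_inter; auto. apply open_compl; auto. }
  destruct HB as [_ HB].
  destruct (HB y (conj Hy (conj (HWs y Hy) Hy'))) as [a [l [F [Hok [[Hc Hn] HBs]]]]].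
  pose proof Hok as [Hv HF].
  pose proof Hc as [y0 [Hy0x [Hy0b Hyeq]]].
  set (v := rangeOf E a l) in *.
  assert (Hbasic : forall z, inX z -> bsrc z = v ->
            ~ (exists e, In e F /\ edgeAt z 0 = Some e) ->
            W z /\ ~ W' z).
  { intros z Hzx Hzb Hze.
    assert (Hz2 : basic a l F (Defs.concat a l z)).
    { split; [exists z; auto|]. intros [f [HfF Hcf]].
      apply cyl_snoc_edge in Hcf. rewrite <- (Nat.add_0_r (length l)) in Hcf.
      rewrite edgeAt_concat_ge in Hcf. apply Hze. eauto. }
    destruct (HBs _ Hz2) as [HW2 [_ HW2']].
    split.
    - apply (inv_concat W a l z); auto.
    - intros H. apply HW2'. apply (inv_concat W' a l z); auto. }
  destruct (edgeAt y0 0) as [e|] eqn:He0.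
  - assert (Hse : src e = v) by (rewrite (src_edge0 y0 e); auto).
    assert (HeF : ~ In e F).
    { intros HeF. apply Hn. exists e. split; auto. apply cyl_snoc; auto.
      rewrite Hyeq. rewrite <- (Nat.add_0_r (length l)). rewrite edgeAt_concat_ge. auto. }
    assert (Hfv : fvalid E v [e]) by (simpl; auto).
    assert (Hc0 : cyl v [e] y0).
    { apply cyl_intro; auto. intros i Hi. simpl in Hi. assert (i = 0) by lia. subst. auto. }
    destruct Hc0 as [t [Htx [Htb Hteq]]]. simpl in Htb.
    assert (Hkey : forall z, cyl (rng e) [] z -> W z /\ ~ W' z).
    { intros z Hz. apply cyl_iff in Hz; [|simpl; auto]. destruct Hz as [Hzx [Hzb _]].
      assert (Hz1x : inX (Defs.concat v [e] z)) by (apply inX_concat; auto).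
      assert (Hz1b : bsrc (Defs.concat v [e] z) = v) by (apply bsrc_concat; auto).
      destruct (Hbasic _ Hz1x Hz1b) as [H1 H2].
      - intros [f [HfF Hf0]]. rewrite edgeAt_concat_lt in Hf0 by (simpl; lia).
        simpl in Hf0. inversion Hf0. subst. contradiction.
      - split.
        + apply (inv_concat W v [e] z); auto.
        + intros H. apply H2. apply (inv_concat W' v [e] z); auto. }
    assert (Htc : cyl (rng e) [] t) by (apply cyl_intro; simpl; auto; intros; lia).
    exists (rng e). split; [|split].
    + exists t. split; auto. apply Hkey; auto.
    + exists []. split.
      * exists t. split; auto. intros [? [[] _]].
      * intros z [Hz _]. apply Hkey; auto.
    + intros [F' [[z Hz] Hs']]. apply (proj2 (Hkey z (proj1 Hz))). auto.
  - assert (Hy0eq : y0 = FinP v []).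
    { destruct y0 as [v0 m|g]; simpl in He0; [|discriminate].
      destruct m; [|discriminate]. simpl in Hy0b. subst. reflexivity. }
    assert (Hy0W : W y0).
    { apply (inv_concat W a l y0); auto. rewrite <- Hyeq. auto. }
    assert (Hy0basic : forall F', basic v [] F' y0).
    { intros F'. split.
      - apply cyl_intro; simpl; auto. intros; lia.
      - intros [e [_ Hce]]. apply (edgeAt_cyl _ _ _ 0) in Hce; [|simpl; lia].
        simpl in Hce. congruence. }
    exists v. split; [|split].
    + exists y0. split; auto.
    + exists F. split; [exists y0; auto|].
      intros z [Hz Hzn]. apply cyl_iff in Hz; [|simpl; auto]. destruct Hz as [Hzx [Hzb _]].
      apply (Hbasic z); auto. intros [f [HfF Hf0]]. apply Hzn. exists f. split; auto.
      simpl. apply cyl_intro; auto.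
      * simpl. split; auto.
      * intros i Hi. simpl in Hi. assert (i = 0) by lia. subst. auto.
    + intros [F' [_ Hs']]. apply Hy'. rewrite Hyeq.
      apply (inv_concat W' a l y0); auto.
Qed.


Fixpoint cnt (P : vert E -> Prop) (A : list (vert E)) : nat :=
  match A with
  | [] => 0
  | a :: A' => (if excluded_middle_informative (P a) then 1 else 0) + cnt P A'
  end.

Lemma cnt_le (P Q : vert E -> Prop) A : (forall v, P v -> Q v) -> cnt P A <= cnt Q A.
Proof.
  intros H. induction A as [|a A IH]; simpl; auto.
  destruct (excluded_middle_informative (P a)); destruct (excluded_middle_informative (Q a));
    try lia. exfalso; auto.
Qed.

Lemma cnt_lt (P Q : vert E -> Prop) A v0 :
  (forall v, P v -> Q v) -> In v0 A -> Q v0 -> ~ P v0 -> cnt P A < cnt Q A.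
Proof.
  intros H Hin HQ HP. induction A as [|a A IH]; simpl in *; [contradiction|].
  pose proof (cnt_le P Q A H).
  destruct Hin as [Ha|Hin].
  - subst a. destruct (excluded_middle_informative (P v0)); [contradiction|].
    destruct (excluded_middle_informative (Q v0)); [|contradiction]. lia.
  - specialize (IH Hin).
    destruct (excluded_middle_informative (P a)); destruct (excluded_middle_informative (Q a));
      try lia. exfalso; auto.
Qed.

Lemma cnt_bound (P : vert E -> Prop) A : cnt P A <= length A.
Proof.
  induction A as [|a A IH]; simpl; auto.
  destruct (excluded_middle_informative (P a)); lia.
Qed.

Lemma A_exists (U : bpath E -> Prop) :
  is_compact U -> exists A : list (vert E), forall y, U y -> In (bsrc y) A.
Proof.
  intros [HUx HU].
  destruct (HU (fun O => exists w, O = cyl w [])) as [L [HL1 HL2]].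
  - intros O [w ->]. apply is_open_cyl. simpl; auto.
  - intros y Hy. exists (cyl (bsrc y) []). split; [eauto|].
    apply cyl_intro; simpl; auto. intros; lia.
  - assert (HA : exists A : list (vert E), forall O, In O L -> exists w, In w A /\ O = cyl w []).
    { clear HL2. induction L as [|O L IH].
      - exists []. intros ? [].
      - destruct IH as [A HA]; [intros; apply HL1; simpl; auto|].
        destruct (HL1 O (or_introl eq_refl)) as [w ->].
        exists (w :: A). intros O' [<-|Hin].
        + exists w. simpl; auto.
        + destruct (HA O' Hin) as [w' [? ?]]. exists w'. simpl; auto. }
    destruct HA as [A HA]. exists A. intros y Hy.
    destruct (HL2 y Hy) as [O [Hin HO]]. destruct (HA O Hin) as [w [Hw ->]].
    apply bsrc_cyl in HO; [|simpl; auto]. subst; auto.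
Qed.

Section Main.
Variable U : bpath E -> Prop.
Variable hU : coi U.
Variable A : list (vert E).
Variable hA : forall y, U y -> In (bsrc y) A.

Definition Msub (V : bpath E -> Prop) := minimal_coi V /\ (forall x, V x -> U x).

Lemma P1c (W W' : bpath E -> Prop) y :
  coi W -> coi W' -> (forall z, W' z -> W z) -> (forall z, W z -> U z) -> W y -> ~ W' y ->
  cnt (good W') A < cnt (good W) A.
Proof.
  intros HW HW' Hs HU Hy Hy'.
  destruct (P1 W W' y HW HW' Hs Hy Hy') as [v [[z [Hz Hzb]] [Hg Hng]]].
  apply (cnt_lt _ _ _ v); auto.
  - intros u. apply good_mono; auto.
  - subst v. apply hA. auto.
Qed.

Lemma minimal_disj V V' x :
  minimal_coi V -> minimal_coi V' -> V x -> V' x -> forall y, V y <-> V' y.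
Proof.
  intros [HV [_ HVm]] [HV' [_ HVm']] Hx Hx'.
  assert (Hi : coi (fun y => V y /\ V' y)) by (apply coi_inter; auto).
  assert (H1 := HVm _ Hi (ex_intro _ x (conj Hx Hx')) (fun y H => proj1 H)).
  assert (H2 := HVm' _ Hi (ex_intro _ x (conj Hx Hx')) (fun y H => proj2 H)).
  intros y; split; intros Hy; [apply H1|apply H2]; auto.
Qed.

Lemma cover_aux x : forall n W, cnt (good W) A < n -> coi W -> (forall y, W y -> U y) -> W x ->
  exists V, Msub V /\ V x.
Proof.
  induction n as [|n IH]; intros W Hn HW HWU Hx; [lia|].
  destruct (classic (exists W'', coi W'' /\ (exists z, W'' z) /\ (forall z, W'' z -> W z) /\
                       exists y, W y /\ ~ W'' y)) as [[W'' [HW'' [[z Hz] [Hs [y [Hy Hy'']]]]]]|Hno].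
  - destruct (classic (W'' x)) as [Hx''|Hx''].
    + apply (IH W''); auto.
      * pose proof (P1c W W'' y HW HW'' Hs HWU Hy Hy''). lia.
    + apply (IH (fun y => W y /\ ~ W'' y)); auto.
      * pose proof (P1c W (fun y => W y /\ ~ W'' y) z HW (coi_diff W W'' HW HW'')
                     (fun y H => proj1 H) HWU (Hs z Hz) (fun H => proj2 H Hz)). lia.
      * apply coi_diff; auto.
      * intros y0 [? _]; auto.
  - exists W. split; auto. split; auto. split; [exact HW|]. split; [eauto|].
    intros W'' HW'' Hne Hs y Hy. apply NNPP. intros Hy''. apply Hno.
    exists W''. split; [exact HW''|]. split; [exact Hne|]. split; [exact Hs|]. eauto.
Qed.

Fixpoint unionL (Ls : list (bpath E -> Prop)) : bpath E -> Prop :=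
  match Ls with
  | [] => fun _ => False
  | V :: Ls' => fun y => V y \/ unionL Ls' y
  end.

Fixpoint pd (Ls : list (bpath E -> Prop)) : Prop :=
  match Ls with
  | [] => True
  | V :: Ls' => pd Ls' /\ forall V', In V' Ls' -> forall x, ~ (V x /\ V' x)
  end.

Lemma unionL_in Ls y : unionL Ls y -> exists V, In V Ls /\ V y.
Proof.
  induction Ls as [|V Ls IH]; simpl; [tauto|].
  intros [H|H]; [exists V; auto|]. destruct (IH H) as [V' [? ?]]. exists V'; auto.
Qed.

Lemma count_pd Ls : (forall V, In V Ls -> Msub V) -> pd Ls ->
  coi (unionL Ls) /\ (forall y, unionL Ls y -> U y) /\ length Ls <= cnt (good (unionL Ls)) A.
Proof.
  induction Ls as [|V Ls IH]; intros HM Hpd.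
  - simpl. split; [apply coi_empty|]. split; [tauto|lia].
  - destruct Hpd as [Hpd Hdisj].
    destruct IH as [Hc [HsU Hlen]]; [intros; apply HM; simpl; auto|auto|].
    destruct (HM V (or_introl eq_refl)) as [[HV [[x Hx] _]] HVU].
    assert (Hc' : coi (unionL (V :: Ls))) by (apply coi_union; auto).
    split; auto. split.
    + intros y [?|?]; auto.
    + assert (Hx' : ~ unionL Ls x).
      { intros H. destruct (unionL_in Ls x H) as [V' [Hin HV']]. apply (Hdisj V' Hin x). auto. }
      pose proof (P1c (unionL (V :: Ls)) (unionL Ls) x Hc' Hc (fun y H => or_intror H)
                    (fun y H => match H with or_introl h => HVU y h | or_intror h => HsU y h end)
                    (or_introl Hx) Hx').
      change (length (V :: Ls)) with (S (length Ls)). lia.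
Qed.

Lemma fin_aux : forall n, (exists L : list (bpath E -> Prop),
      forall V, Msub V -> exists W, In W L /\ (forall x, V x <-> W x)) \/
  (exists Ls, length Ls = n /\ (forall V, In V Ls -> Msub V) /\ pd Ls).
Proof.
  induction n as [|n IH].
  - right. exists []. split; [reflexivity|]. split; [intros ? []|exact I].
  - destruct IH as [H|[Ls [Hlen [HM Hpd]]]]; [left; auto|].
    destruct (classic (forall V, Msub V -> exists W, In W Ls /\ (forall x, V x <-> W x))) as [Hall|Hnall].
    + left. exists Ls. auto.
    + apply not_all_ex_not in Hnall. destruct Hnall as [V HV].
      apply imply_to_and in HV. destruct HV as [HMV HnV].
      right. exists (V :: Ls). split; [simpl; auto|]. split.
      * intros V' [<-|Hin]; auto.
      * simpl. split; auto. intros V' Hin x [Hx Hx']. apply HnV. exists V'. split; auto.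
        apply (minimal_disj V V' x); auto.
        -- apply HMV.
        -- apply (HM V' Hin).
Qed.

End Main.

End S.

Theorem lemma3p9 (E : Graph) (U : bpath E -> Prop)
  (hU : compact_open_invariant U) :
  let M := fun V : bpath E -> Prop => minimal_coi V /\ (forall x, V x -> U x) in
  (* M is finite (up to extensional equality of subsets) *)
  (exists L : list (bpath E -> Prop),
      forall V, M V -> exists W, In W L /\ (forall x, V x <-> W x)) /\
  (* elements of M are pairwise disjoint *)
  (forall V W, M V -> M W -> (exists x, V x /\ W x) -> forall x, V x <-> W x) /\
  (* U is the union of the elements of M *)
  (forall x, U x <-> exists V, M V /\ V x).
Proof.
  intros M.
  destruct (A_exists E U (proj1 (proj2 (proj2 hU)))) as [A hA].
  split; [|split].
  - destruct (fin_aux E U (S (length A))) as [H|[Ls [Hlen [HM Hpd]]]]; [exact H|].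
    exfalso. destruct (count_pd E U A hA Ls HM Hpd) as [_ [_ H]].
    pose proof (cnt_bound E (good E (unionL E Ls)) A). lia.
  - intros V W [HV _] [HW _] [x [Hx Hx']]. apply (minimal_disj E V W x); auto.
  - intros x. split.
    + intros Hx. destruct (cover_aux E U A hA x (S (cnt E (good E U) A)) U) as [V [HV HVx]]; auto.
      exists V. split; auto.
    + intros [V [[_ HVU] HVx]]. auto.
Qed.
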